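(* The class of directed 1D aTAM systems is not intrinsically universal: there is no finite 1D tile set $U$ (and temperature $\tau'$) with computable $\mathcal{R},S$ such that every directed 1D aTAM system $\mathcal{T}$ is simulated, at some scale $m$ under $\mathcal{R}(\mathcal{T})$, by the 1D aTAM system $(U,S(\mathcal{T}),\tau')$ (whether or not that simulating system is required to be directed).
   Context: 1D aTAM: a tile type has a west glue and an east glue, each a pair (finite string label, nonnegative integer strength); a tile set is finite. Assemblies are partial functions $\alpha:\mathbb{Z}\dashrightarrow T$ with nonempty interval domain; adjacent tiles interact if the east glue of the left equals the west glue of the right with positive strength; $\alpha$ is $\tau$-stable if every cut between consecutive tiles has strength $\ge\tau$. A system $\mathcal{T}=(T,\sigma,\tau)$ has finite $\tau$-stable seed $\sigma$; growth is by single $\tau$-stable tile additions (finite or infinite sequences, result = limit); $\mathcal{A}[\mathcal{T}]$ are producible assemblies, $\mathcal{A}_\Box[\mathcal{T}]$ the producible ones admitting no further tile. $\mathcal{T}$ is directed if $|\mathcal{A}_\Box[\mathcal{T}]|=1$. Simulation: an $m$-block over $S$ is a partial function $\{0,\dots,m-1\}\dashrightarrow S$; $\alpha^m_x$ is $i\mapsto\alpha(mx+i)$. A partial $R$ from $m$-blocks to $T$ is valid if $\alpha\sqsubseteq\beta$, $\alpha\in\mathrm{dom}R$ imply $R(\beta)=R(\alpha)$; $R^*(\alpha')$ is $x\mapsto R(\alpha'^m_x)$. $\alpha'$ maps cleanly if each nonempty block at $x$ has $x$ or $x\pm1$ in $\mathrm{dom}\,R^*(\alpha')$ (or at most one nonempty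 block). $\mathcal{S}$ simulates $\mathcal{T}$ under $R$ if: (i) $R^*$ maps $\mathcal{A}[\mathcal{S}]$ onto $\mathcal{A}[\mathcal{T}]$ and $\mathcal{A}_\Box[\mathcal{S}]$ onto $\mathcal{A}_\Box[\mathcal{T}]$, all producible assemblies mapping cleanly; (ii) producible $\alpha'\to^\mathcal{S}\beta'$ implies $R^*(\alpha')\to^\mathcal{T}R^*(\beta')$; (iii) for every $\alpha\in\mathcal{A}[\mathcal{T}]$ there is $\Pi\subset\mathcal{A}[\mathcal{S}]$ with $R^*=\alpha$ on $\Pi$ such that for every producible $\beta$ with $\alpha\to^\mathcal{T}\beta$: each $\alpha'\in\Pi$ produces some $\beta'$ with $R^*(\beta')=\beta$, and whenever producible $\alpha''\to^\mathcal{S}\beta'$ with $R^*(\alpha'')=\alpha$, $R^*(\beta')=\beta$, some $\alpha'\in\Pi$ produces $\alpha''$. *)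

(* Defs.v *)
From HB Require Import structures.
From Stdlib Require Import String Ascii.
From mathcomp Require Import all_boot all_order all_algebra.
Set Implicit Arguments. Unset Strict Implicit. Unset Printing Implicit Defensive.
Import Order.TTheory GRing.Theory Num.Theory.

Definition str2seq (s : string) : seq nat :=
  map nat_of_ascii (list_ascii_of_string s).
Definition seq2str (l : seq nat) : string :=
  string_of_list_ascii (map ascii_of_nat l).
Lemma str2seqK : cancel str2seq seq2str.
Proof.
move=> s; rewrite /str2seq /seq2str -map_comp.
rewrite (@eq_map _ _ _ id); last by move=> a /=; rewrite ascii_nat_embedding.
by rewrite map_id string_of_list_ascii_of_string.
Qed.
HB.instance Definition _ := Countable.copy string (can_type str2seqK).

(* A glue is a pair (label, strength); a tile type is (west glue, east glue). *)
Definition glue := (string * nat)%type.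
Definition tile := (glue * glue)%type.
Definition west (t : tile) : glue := t.1.
Definition east (t : tile) : glue := t.2.

Definition asm := int -> option tile.

Definition in_dom (a : asm) (x : int) : bool := a x != None.

Local Open Scope ring_scope.

Definition is_asm (T : seq tile) (a : asm) : Prop :=
  (exists x, in_dom a x) /\
  (forall x y z : int, x <= y -> y <= z -> in_dom a x -> in_dom a z -> in_dom a y) /\
  (forall x t, a x = Some t -> t \in T).

Definition cut_strength (a : asm) (x : int) : nat :=
  match a x, a (x + 1) with
  | Some t, Some t' => if east t == west t' then (east t).2 else 0%N
  | _, _ => 0%N
  end.

Definition stable (tau : nat) (a : asm) : Prop :=
  forall x, in_dom a x -> in_dom a (x + 1) -> (tau <= cut_strength a x)%N.

Definition upd (a : asm) (x : int) (t : tile) : asm :=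
  fun y => if y == x then Some t else a y.

Definition step (T : seq tile) (tau : nat) (a b : asm) : Prop :=
  exists x t, t \in T /\ a x = None /\ b = upd a x t /\ is_asm T b /\ stable tau b.

(* a produces b: b is the result (limit) of a finite or infinite sequence of
   single tile additions starting at a (stuttering steps encode finite ones). *)
Definition produces (T : seq tile) (tau : nat) (a b : asm) : Prop :=
  exists f : nat -> asm, f 0%N = a /\
    (forall i, f i.+1 = f i \/ step T tau (f i) (f i.+1)) /\
    (forall x, exists i, forall j, (i <= j)%N -> f j x = b x).

(* Finite assemblies (used as seeds): offset and a (nonempty) word of tiles. *)
Definition finasm := (int * seq tile)%type.
Definition to_asm (s : finasm) : asm :=
  fun x => if s.1 <= x then nth None (map Some s.2) `|x - s.1|%N else None.

Definition sys := (seq tile * finasm * nat)%type.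
Definition tiles (s : sys) : seq tile := s.1.1.
Definition seed (s : sys) : finasm := s.1.2.
Definition temp (s : sys) : nat := s.2.

Definition valid_sys (s : sys) : Prop :=
  (0 < temp s)%N /\ (seed s).2 != [::] /\ all (mem (tiles s)) (seed s).2 /\
  stable (temp s) (to_asm (seed s)).

Definition producible (s : sys) (a : asm) : Prop :=
  produces (tiles s) (temp s) (to_asm (seed s)) a.
Definition sprod (s : sys) (a b : asm) : Prop := produces (tiles s) (temp s) a b.

Definition terminal (s : sys) (a : asm) : Prop :=
  producible s a /\ ~ (exists b, step (tiles s) (temp s) a b).

Definition directed (s : sys) : Prop :=
  exists a, forall b, terminal s b <-> b = a.

Definition mblock := seq (option tile).
Definition repfun := (nat * seq (mblock * tile))%type.
Definition scale (r : repfun) : nat := r.1.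

Definition Rfun (r : repfun) (b : mblock) : option tile :=
  if size b == r.1 then ohead [seq p.2 | p <- r.2 & p.1 == b] else None.

Definition blk (m : nat) (a : asm) (x : int) : mblock :=
  [seq a (m%:Z * x + i%:Z) | i <- iota 0 m].

Definition Rstar (r : repfun) (a : asm) : asm := fun x => Rfun r (blk r.1 a x).

Definition block_over (U : seq tile) (b : mblock) : bool :=
  all (fun o => if o is Some t then t \in U else true) b.

Definition blk_le (b b' : mblock) : Prop :=
  forall i, nth None b i != None -> nth None b' i = nth None b i.

Definition valid_repr (U : seq tile) (r : repfun) : Prop :=
  forall b b', size b = r.1 -> size b' = r.1 -> block_over U b -> block_over U b' ->
    blk_le b b' -> Rfun r b != None -> Rfun r b' = Rfun r b.

Definition nonempty_blk (m : nat) (a : asm) (x : int) : bool :=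
  has (fun o => o != None) (blk m a x).

Definition maps_cleanly (r : repfun) (a : asm) : Prop :=
  (forall x, nonempty_blk r.1 a x ->
     [\/ in_dom (Rstar r a) x, in_dom (Rstar r a) (x + 1) | in_dom (Rstar r a) (x - 1)])
  \/ (forall x y, nonempty_blk r.1 a x -> nonempty_blk r.1 a y -> x = y).

Definition simulates (sS sT : sys) (r : repfun) : Prop :=
  (0 < r.1)%N /\ valid_repr (tiles sS) r /\
  (forall a', producible sS a' -> producible sT (Rstar r a')) /\
  (forall a, producible sT a -> exists a', producible sS a' /\ Rstar r a' = a) /\
  (forall a', terminal sS a' -> terminal sT (Rstar r a')) /\
  (forall a, terminal sT a -> exists a', terminal sS a' /\ Rstar r a' = a) /\
  (forall a', producible sS a' -> maps_cleanly r a') /\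
  (forall a' b', producible sS a' -> sprod sS a' b' -> sprod sT (Rstar r a') (Rstar r b')) /\
  (forall a, producible sT a -> exists Pi : asm -> Prop,
     (forall a', Pi a' -> producible sS a' /\ Rstar r a' = a) /\
     (forall b, producible sT b -> sprod sT a b ->
        (forall a', Pi a' -> exists b', sprod sS a' b' /\ Rstar r b' = b) /\
        (forall a'' b', producible sS a'' -> sprod sS a'' b' ->
           Rstar r a'' = a -> Rstar r b' = b ->
           exists2 a', Pi a' & sprod sS a' a''))).

Inductive prf : Type :=
| PZero | PSucc | PProj of nat | PComp of prf & list prf
| PRec of prf & prf | PMu of prf.

Inductive peval : prf -> seq nat -> nat -> Prop :=
| ev_zero v : peval PZero v 0
| ev_succ n v : peval PSucc (n :: v) n.+1
| ev_proj i v : (i < size v)%N -> peval (PProj i) v (nth 0%N v i)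
| ev_comp f gs v ys y : pevals gs v ys -> peval f ys y -> peval (PComp f gs) v y
| ev_rec0 f g v y : peval f v y -> peval (PRec f g) (0%N :: v) y
| ev_recS f g n v r y : peval (PRec f g) (n :: v) r -> peval g (n :: r :: v) y ->
    peval (PRec f g) (n.+1 :: v) y
| ev_mu f v n : peval f (n :: v) 0 ->
    (forall k, (k < n)%N -> exists2 y, y != 0%N & peval f (k :: v) y) ->
    peval (PMu f) v n
with pevals : list prf -> seq nat -> seq nat -> Prop :=
| evs_nil v : pevals nil v [::]
| evs_cons g gs v y ys : peval g v y -> pevals gs v ys -> pevals (g :: gs) v (y :: ys).

Definition computable (A B : countType) (f : A -> B) : Prop :=
  exists e : prf, forall a, peval e [:: pickle a] (pickle (f a)).

(* Main.v *)
Require Import Defs.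
From mathcomp Require Import all_boot all_order all_algebra zify.
From Stdlib Require Import FunctionalExtensionality String.
Import Order.TTheory GRing.Theory Num.Theory.
Set Implicit Arguments. Unset Strict Implicit. Unset Printing Implicit Defensive.
Local Open Scope ring_scope.



Definition seqok T tau (f : nat -> asm) :=
  forall i, f i.+1 = f i \/ step T tau (f i) (f i.+1).

Lemma seq_mono T tau f : seqok T tau f ->
  forall i k x, f i x != None -> f (i + k)%N x = f i x.
Proof.
move=> hf i k x hx; elim: k => [|k IH]; first by rewrite addn0.
rewrite addnS; case: (hf (i + k)%N) => [->//|[y [t [_ [hy [-> _]]]]]].
rewrite /upd; case: eqP => [exy|//]; subst y.
by move: hx; rewrite -IH hy.
Qed.

Lemma seq_mono' T tau f : seqok T tau f ->
  forall i j x, (i <= j)%N -> f i x != None -> f j x = f i x.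
Proof. by move=> hf i j x /subnKC <- h; apply: seq_mono. Qed.

Lemma seq_inv T tau f (P : asm -> Prop) : seqok T tau f -> P (f 0%N) ->
  (forall a b, P a -> step T tau a b -> P b) -> forall i, P (f i).
Proof.
move=> hf h0 hs; elim=> [//|i IH]; case: (hf i) => [->//|]; exact: hs.
Qed.

Lemma lim_val T tau a b f : f 0%N = a -> seqok T tau f ->
  (forall x, exists i, forall j, (i <= j)%N -> f j x = b x) ->
  forall i x, f i x != None -> b x = f i x.
Proof.
move=> _ hf hl i x hx; case: (hl x) => i0 h0.
rewrite -(h0 (maxn i i0)) ?leq_maxr //; apply: seq_mono' => //; exact: leq_maxl.
Qed.

Lemma produces_mono T tau a b x : produces T tau a b -> a x != None -> b x = a x.
Proof. by case=> f [h0 [hf hl]] hx; rewrite -h0 in hx *; apply: (lim_val h0 hf hl). Qed.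

Definition good T tau a := is_asm T a /\ stable tau a.

Lemma cut_eq a b x : a x = b x -> a (x + 1) = b (x + 1) -> cut_strength a x = cut_strength b x.
Proof. by rewrite /cut_strength => -> ->. Qed.

Lemma produces_good T tau a b : good T tau a -> produces T tau a b -> good T tau b.
Proof.
move=> ga [f [h0 [hf hl]]].
have gf : forall i, good T tau (f i).
  apply: seq_inv hf _ _; first by rewrite h0.
  by move=> a0 b0 _ [x [t [_ [_ [_ [h1 h2]]]]]].
have lv := lim_val h0 hf hl.
have ex : forall x, in_dom b x -> exists i, f i x = b x.
  by move=> x _; case: (hl x) => i hi; exists i; apply: hi.
have ex2 : forall x y, in_dom b x -> in_dom b y -> exists i, f i x = b x /\ f i y = b y.
  move=> x y hx hy; case: (ex x hx) => i1 h1; case: (ex y hy) => i2 h2.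
  exists (maxn i1 i2); split.
    by rewrite (@seq_mono' _ _ _ hf i1) ?leq_maxl // h1.
  by rewrite (@seq_mono' _ _ _ hf i2) ?leq_maxr // h2.
case: ga => [[[x0 hx0] _] _].
split; [split; [|split]|].
- exists x0; rewrite /in_dom (@produces_mono T tau a) //; by exists f.
- move=> x y z hxy hyz hx hz; case: (ex2 _ _ hx hz) => i [e1 e2].
  have [[_ [hint _]] _] := gf i.
  have hy : in_dom (f i) y by apply: (hint x y z) => //; rewrite /in_dom ?e1 ?e2.
  by rewrite /in_dom (lv i y hy).
- move=> x t hx; have hx' : in_dom b x by rewrite /in_dom hx.
  case: (ex x hx') => i e; have [[_ [_ ht]] _] := gf i; apply: (ht x); by rewrite e.
- move=> x hx hx1; case: (ex2 _ _ hx hx1) => i [e1 e2].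
  have [_ st] := gf i; rewrite -(cut_eq e1 e2); apply: st; by rewrite /in_dom ?e1 ?e2.
Qed.

Definition freach T tau a b := exists f N, f 0%N = a /\ seqok T tau f /\
  forall j, (N <= j)%N -> f j = b.

Lemma freach_refl T tau a : freach T tau a a.
Proof. by exists (fun _ => a), 0%N; split=> //; split=> // i; left. Qed.

Lemma freach_step T tau a b c : freach T tau a b -> step T tau b c -> freach T tau a c.
Proof.
case=> f [N [h0 [hf hN]]] hs.
exists (fun i => if (i <= N)%N then f i else c), N.+1; split=> //; split.
  move=> i /=; case: (leqP i.+1 N) => hi.
  - by rewrite (ltnW hi); apply: hf.
  case: (leqP i N) => hi2.
  - have -> : i = N by apply/eqP; rewrite eqn_leq hi2 -ltnS hi.
    by right; rewrite hN.
  - by left.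
by move=> j hj; rewrite leqNgt hj.
Qed.

Lemma freach_produces T tau a b : freach T tau a b -> produces T tau a b.
Proof.
case=> f [N [h0 [hf hN]]]; exists f; split=> //; split=> // x.
by exists N => j hj; rewrite hN.
Qed.



Definition dtile : tile := (("", 0%N), ("", 0%N))%string.

Lemma to_asm_dom (s : finasm) x :
  (to_asm s x != None) = (s.1 <= x) && (`|x - s.1| < size s.2)%N.
Proof.
rewrite /to_asm; case: ifP => h /=; last by [].
case: (ltnP `|x - s.1| (size s.2)) => hl.
  by rewrite (nth_map dtile).
by rewrite nth_default ?size_map // eqxx.
Qed.

Lemma to_asm_some (s : finasm) x t : to_asm s x = Some t -> t \in s.2.
Proof.
rewrite /to_asm; case: ifP => h //.
case: (ltnP `|x - s.1| (size s.2)) => hl.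
  by rewrite (nth_map dtile) // => -[<-]; apply: mem_nth.
by rewrite nth_default ?size_map.
Qed.

Lemma seed_good (s : sys) : valid_sys s -> good (tiles s) (temp s) (to_asm (seed s)).
Proof.
case=> _ [hne [hall hst]]; split=> //; split; [|split].
- exists (seed s).1; rewrite /in_dom to_asm_dom lexx subrr /=.
  by case: (seed s).2 hne.
- move=> x y z hxy hyz; rewrite /in_dom !to_asm_dom => /andP[h1 h2] /andP[h3 h4].
  apply/andP; split; lia.
- move=> x t /to_asm_some ht; exact: (allP hall).
Qed.



Definition G (k : nat) : glue := (""%string, k.+1).
Definition tt (k : nat) : tile := (G k, G k.+1).
Definition Tn (n : nat) : sys := (map tt (iota 0 n.+1), (0%:Z, [:: tt 0]), 1%N).
Definition P (k : nat) : asm :=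
  fun x => if (0 <= x) && (x <= k%:Z) then Some (tt `|x|) else None.

Lemma tt_in n k : (k <= n)%N -> tt k \in tiles (Tn n).
Proof. by move=> h; apply: map_f; rewrite mem_iota /=; lia. Qed.

Lemma tt_inv n t : t \in tiles (Tn n) -> exists2 j, (j <= n)%N & t = tt j.
Proof. by case/mapP=> j; rewrite mem_iota => hj ->; exists j => //; lia. Qed.

Lemma cut_tt i j : (0 < (if east (tt i) == west (tt j) then (east (tt i)).2 else 0))%N
  -> j = i.+1.
Proof. rewrite /east /west /=; case: eqP => //= [[->]] //. Qed.

Lemma Tvalid n : valid_sys (Tn n).
Proof.
split=> //; split=> //; split; first by apply/allP => t; rewrite inE => /eqP ->; apply: (tt_in (n:=n)).
move=> x; rewrite /in_dom !to_asm_dom /= => h1 h2; lia.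
Qed.

Lemma Tseed n : to_asm (seed (Tn n)) = P 0.
Proof.
apply: functional_extensionality => x; rewrite /to_asm /P /= subr0.
case h0: (0 <= x) => //=; case: (ltnP `|x| 1) => h.
  have e : `|x|%N = 0%N by lia.
  have e2 : x <= 0 by lia.
  by rewrite e e2.
rewrite nth_default //; case: ifP => //; lia.
Qed.

Definition Q (n : nat) (a : asm) :=
  (forall x, a x != None -> (0 <= x) && (x <= n%:Z) /\ a x = Some (tt `|x|%N)) /\ a 0 != None.

Lemma Q_step n a b : Q n a -> step (tiles (Tn n)) 1 a b -> Q n b.
Proof.
case=> hQ h0 [x [t [ht [hax [-> [[_ [hint _]] hst]]]]]].
have [j hj et] := tt_inv ht.
have hx0 : x != 0 by apply/eqP => e; move: h0; rewrite -e hax.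
have hb0 : upd a x t 0 != None by rewrite /upd (eq_sym 0) (negPf hx0).
have hbx : upd a x t x != None by rewrite /upd eqxx.
have key : (0 <= x) && (x <= n%:Z) /\ t = tt `|x|%N.
  case: (ltP 0 x) => hpos.
  - have hd : in_dom (upd a x t) (x - 1) by apply: (hint 0 _ x) => //; lia.
    have hne : x - 1 != x by apply/eqP; lia.
    have ha : a (x - 1) != None by move: hd; rewrite /in_dom /upd (negPf hne).
    have [hr ea] := hQ _ ha.
    have := hst (x - 1) hd; rewrite subrK => /(_ hbx).
    rewrite /cut_strength /upd (negPf hne) subrK eqxx ea et.
    move=> /cut_tt ej; subst j; split; first by lia.
    congr tt; lia.
  - have hneg : x < 0 by lia.
    have hd : in_dom (upd a x t) (x + 1) by apply: (hint x _ 0) => //; lia.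
    have hne : x + 1 != x by apply/eqP; lia.
    have ha : a (x + 1) != None by move: hd; rewrite /in_dom /upd (negPf hne).
    have [hr ea] := hQ _ ha.
    have := hst x hbx hd.
    rewrite /cut_strength /upd (negPf hne) eqxx ea et.
    move=> /cut_tt ej; exfalso; lia.
split=> // y; case: (eqVneq y x) => [->|hne]; rewrite /upd ?eqxx ?(negPf hne); last exact: hQ.
case: key => k1 ->; by split.
Qed.

Lemma Q_prod n a : producible (Tn n) a -> Q n a.
Proof.
move=> hp; have hp' := hp; case: hp => f [h0 [hf hl]].
have qf : forall i, Q n (f i).
  apply: (seq_inv hf); last by move=> ???; apply: Q_step.
  rewrite h0 Tseed /Q /P; split=> // x; case: ifP => // h _; split => //; lia.
have lv := lim_val h0 hf hl.
split.
- move=> x hx; case: (hl x) => i hi; have := hi i (leqnn i) => e.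
  rewrite -e in hx *; exact: (proj1 (qf i)).
- rewrite (produces_mono hp') Tseed //.
Qed.

Lemma P_Q n k : (k <= n)%N -> Q n (P k).
Proof.
move=> hk; rewrite /Q /P; split=> // x; case: ifP => // h _; split=> //; lia.
Qed.

Lemma P_good n k : (k <= n)%N -> good (tiles (Tn n)) 1 (P k).
Proof.
move=> hk; split; [split; [|split]|].
- by exists 0; rewrite /in_dom /P.
- move=> x y z hxy hyz; rewrite /in_dom /P; case: ifP => // h1 _; case: ifP => // h3 _.
  by rewrite ifT //; lia.
- move=> x t; rewrite /P; case: ifP => // h [<-]; apply: tt_in; lia.
- move=> x; rewrite /in_dom /cut_strength /P; case: ifP => // h1 _; case: ifP => // h2 _.
  rewrite /east /west /= (_ : absz (x + 1) = (absz x).+1); last by lia.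
  by rewrite eqxx.
Qed.

Lemma P_step n k : (k < n)%N -> step (tiles (Tn n)) 1 (P k) (P k.+1).
Proof.
move=> hk; exists (k.+1%:Z), (tt k.+1); split; first by apply: tt_in.
split; first by rewrite /P ifF //; lia.
split; last by apply: P_good.
apply: functional_extensionality => y; rewrite /upd /P.
case: eqP => [->|hy]; first by rewrite ifT //; lia.
case: ifP => h1; case: ifP => h2 //; lia.
Qed.

Lemma P_freach n k : (k <= n)%N -> freach (tiles (Tn n)) 1 (P 0) (P k).
Proof.
elim: k => [_|k IH hk]; first exact: freach_refl.
apply: freach_step (IH (ltnW hk)) _; exact: P_step.
Qed.

Lemma T_directed n : directed (Tn n).
Proof.
exists (P n) => b; split.
- case=> hp hns; have [hQ h0] := Q_prod hp.
  have hg := produces_good (seed_good (Tvalid n)) hp.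
  have ex : exists k, (fun k : nat => in_dom b k%:Z) k by exists 0%N.
  have bd : forall k, in_dom b k%:Z -> (k <= n)%N.
    by move=> k /hQ [h _]; lia.
  have [K hK hmax] : exists2 K, in_dom b K%:Z & forall j, in_dom b j%:Z -> (j <= K)%N.
    by case: (@ex_maxnP (fun k : nat => in_dom b k%:Z) n ex bd) => [K hK hmax]; exists K.
  have hKn : (K <= n)%N := bd _ hK.
  have eb : b = P K.
    apply: functional_extensionality => x; rewrite /P.
    case: ifP => h.
    + case hbx: (b x) => [t|].
        have hx : b x != None by rewrite hbx.
        by have [_ <-] := hQ x hx.
      have [[_ [hint _]] _] := hg.
      have : in_dom b x by apply: (hint 0 x K%:Z) => //; lia.
      by rewrite /in_dom hbx.
    + case hbx: (b x) => [t|] //.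
      have hx : b x != None by rewrite hbx.
      have [h' _] := hQ x hx.
      have hm := hmax `|x|%N; exfalso.
      have : in_dom b `|x|%N%:Z by rewrite (_ : `|x|%N%:Z = x) ?/in_dom ?hbx //; lia.
      move/hm; lia.
  case: (ltnP K n) => hKn'.
    by exfalso; apply: hns; exists (P K.+1); rewrite eb; apply: P_step.
  have eK : K = n by apply/eqP; rewrite eqn_leq hKn hKn'.
  by rewrite eb eK.
- move=> ->; split.
    by rewrite /producible Tseed; apply: freach_produces; apply: P_freach.
  case=> c hs; have [hQ _] := Q_step (P_Q (leqnn n)) hs.
  case: hs => x [t [_ [hx [ec _]]]].
  have := hQ x; rewrite ec /upd eqxx => /(_ isT) [h _].
  by move: hx; rewrite /P ifT.
Qed.

Lemma P_terminal n : terminal (Tn n) (P n).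
Proof.
split.
  by rewrite /producible Tseed; apply: freach_produces; apply: P_freach.
case=> c hs; have [hQ _] := Q_step (P_Q (leqnn n)) hs.
case: hs => x [t [_ [hx [ec _]]]].
have := hQ x; rewrite ec /upd eqxx => /(_ isT) [h _].
by move: hx; rewrite /P ifT.
Qed.



Lemma blk_size m a x : size (blk m a x) = m.
Proof. by rewrite size_map size_iota. Qed.

Lemma blk_nth m a x i : (i < m)%N -> nth None (blk m a x) i = a (m%:Z * x + i%:Z).
Proof. by move=> h; rewrite (nth_map 0%N) ?size_iota // nth_iota. Qed.

Lemma blk_over U m a x : (forall y t, a y = Some t -> t \in U) -> block_over U (blk m a x).
Proof.
move=> h; apply/allP => o /mapP [i _ ->]; case e: (a _) => [t|] //; exact: h e.
Qed.

Lemma blk_le_mono m a b x : (forall y, a y != None -> b y = a y) ->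
  blk_le (blk m a x) (blk m b x).
Proof.
move=> h i; case: (ltnP i m) => hi.
  by rewrite !blk_nth //; apply: h.
by rewrite nth_default ?blk_size // eqxx.
Qed.

Lemma blk_ne m a x i : (i < m)%N -> a (m%:Z * x + i%:Z) != None -> nonempty_blk m a x.
Proof.
move=> hi ha; apply/hasP; exists (a (m%:Z * x + i%:Z)) => //.
by apply/mapP; exists i => //; rewrite mem_iota.
Qed.

Lemma blk_ne_inv m a x : nonempty_blk m a x ->
  exists2 i, (i < m)%N & a (m%:Z * x + i%:Z) != None.
Proof.
case/hasP => o /mapP [i]; rewrite mem_iota /= => hi -> ho; by exists i.
Qed.

Lemma blk_ne_div m a y : (0 < m)%N -> a y != None -> nonempty_blk m a (y %/ m%:Z)%Z.
Proof.
move=> hm hy; apply: (@blk_ne _ _ _ `|(y %% m%:Z)%Z|%N).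
  have h1 : 0 < m%:Z by lia.
  have h2 : m%:Z != 0 by lia.
  have := ltz_pmod y h1; have := modz_ge0 y h2; lia.
have e : m%:Z * (y %/ m%:Z)%Z + `|(y %% m%:Z)%Z|%N%:Z = y.
  have h2 : m%:Z != 0 by lia.
  have := modz_ge0 y h2; have := divz_eq y (m%:Z); lia.
by rewrite e.
Qed.

Lemma blk_empty m a x : ~~ nonempty_blk m a x -> blk m a x = nseq m None.
Proof.
move=> h; transitivity (nseq (size (blk m a x)) (@None tile)); last by rewrite blk_size.
apply/all_pred1P; apply/allP => o ho.
by move/hasPn: h => /(_ o ho); rewrite negbK.
Qed.



Definition restr (L q : int) (b : asm) : asm :=
  fun x => if (L <= x) && (x <= q) then b x else None.

Lemma unif (f : nat -> asm) b :
  (forall x, exists i, forall j, (i <= j)%N -> f j x = b x) ->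
  forall (L : int) (w : nat), exists N, forall j, (N <= j)%N ->
    forall k, (k <= w)%N -> f j (L + k%:Z) = b (L + k%:Z).
Proof.
move=> hl L; elim=> [|w [N1 IH]].
  case: (hl (L + 0%:Z)) => i hi; exists i => j hj k hk.
  have -> : k = 0%N by lia.
  exact: hi.
case: (hl (L + w.+1%:Z)) => i hi; exists (maxn N1 i) => j hj k hk.
case: (ltnP w k) => hw.
  have -> : k = w.+1 by lia.
  apply: hi; exact: leq_trans (leq_maxr _ _) hj.
apply: IH => //; exact: leq_trans (leq_maxl _ _) hj.
Qed.

Lemma cut_eq2 a b x y : a x = b y -> a (x + 1) = b (y + 1) ->
  cut_strength a x = cut_strength b y.
Proof. by rewrite /cut_strength => -> ->. Qed.

Lemma restrict_freach T tau a b L q : good T tau a -> produces T tau a b ->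
  (forall x, a x != None -> (L <= x) && (x <= q)) -> freach T tau a (restr L q b).
Proof.
move=> ga [f [h0 [hf hl]]] ha.
have gf : forall i, good T tau (f i).
  apply: (seq_inv hf); first by rewrite h0.
  by move=> a0 b0 _ [x [t [_ [_ [_ [h1 h2]]]]]].
exists (fun i => restr L q (f i)).
case: (unif hl L `|q - L|%N) => N hN.
exists N; split.
  apply: functional_extensionality => x; rewrite /restr h0.
  case: ifP => // hw; case e: (a x) => //.
  by move: (ha x); rewrite e hw => /(_ isT).
split.
  move=> i; case: (hf i) => [->|[x [t [ht [hx [e [[_ [hint htl]] hst]]]]]]]; first by left.
  case hw: ((L <= x) && (x <= q)).
  - right; exists x, t; split=> //; split; first by rewrite /restr hw.
    have eu : restr L q (f i.+1) = upd (restr L q (f i)) x t.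
      apply: functional_extensionality => y; rewrite e /restr /upd.
      by case: eqP => [->|]; rewrite ?hw.
    split; first exact: eu.
    split; [split; [|split]|].
    + by exists x; rewrite eu /in_dom /upd eqxx.
    + move=> x1 y z h1 h2; rewrite /in_dom /restr.
      case: ifP => // w1 d1; case: ifP => // w3 d3.
      rewrite ifT; last by lia.
      by apply: (hint x1 y z).
    + move=> y s; rewrite /restr; case: ifP => // _; exact: htl.
    + move=> y; rewrite /in_dom /restr; case: ifP => // w1 d1; case: ifP => // w2 d2.
      rewrite /cut_strength /restr w1 w2; exact: (hst y d1 d2).
  - left; apply: functional_extensionality => y; rewrite e /restr /upd.
    case: eqP => [->|//]; by rewrite hw.
move=> j hj; apply: functional_extensionality => x; rewrite /restr.
case: ifP => // hw.
have -> : x = L + `|x - L|%N%:Z by lia.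
apply: hN => //; lia.
Qed.

Definition Inv U tau a0 (L : int) e (p q : int) :=
  (forall x, in_dom e x = (L <= x) && (x <= q)) /\ p < q /\ L <= p /\ e p = e q /\
  stable tau e /\ (forall x t, e x = Some t -> t \in U) /\ freach U tau a0 e.

Lemma pump1 U tau a0 L e p q : Inv U tau a0 L e p q ->
  exists e', Inv U tau a0 L e' (p + 1) (q + 1).
Proof.
case=> hd [hpq [hLp [hpe [hst [htl hfr]]]]].
have hp1 : in_dom e (p + 1) by rewrite hd; lia.
move: hp1; rewrite /in_dom; case eu: (e (p + 1)) => [u|] // _.
set e' := upd e (q + 1) u.
have hd' : forall x, in_dom e' x = (L <= x) && (x <= q + 1).
  move=> x; rewrite /in_dom /e' /upd; case: (eqVneq x (q + 1)) => [->|hx]; first by rewrite /=; lia.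
  rewrite /=.
  by rewrite -/(in_dom e x) hd; lia.
have ht' : forall x t, e' x = Some t -> t \in U.
  move=> x t; rewrite /e' /upd; case: eqP => [_ [<-]|_]; last exact: htl.
  by apply: (htl (p + 1)).
have hst' : stable tau e'.
  move=> x; rewrite !hd' => h1 h2.
  case: (ltP x q) => hx.
  - have dx : in_dom e x by rewrite hd; lia.
    have dx1 : in_dom e (x + 1) by rewrite hd; lia.
    rewrite (@cut_eq2 e' e x x); first exact: hst.
      by rewrite /e' /upd ifF //; apply/eqP; lia.
    by rewrite /e' /upd ifF //; apply/eqP; lia.
  - have -> : x = q by lia.
    rewrite (@cut_eq2 e' e q p); first by apply: hst; rewrite hd; lia.
      by rewrite /e' /upd ifF ?hpe //; apply/eqP; lia.
    by rewrite /e' /upd eqxx eu.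
have hstep : step U tau e e'.
  exists (q + 1), u; split; first by apply: (htl (p + 1)).
  split; first by case e1: (e (q + 1)) => [s|] //; have := hd (q + 1); rewrite /in_dom e1 /=; lia.
  split=> //; split=> //; split; [|split] => //.
  - by exists (q + 1); rewrite hd'; lia.
  - by move=> x y z h1 h2; rewrite !hd'; lia.
exists e'; split=> //; split; first lia.
split; first lia.
split; first by rewrite /e' /upd eqxx ifF ?eu //; apply/eqP; lia.
split=> //. split=> //. exact: (freach_step hfr hstep).
Qed.

Lemma pumpk U tau a0 L e p q : Inv U tau a0 L e p q ->
  forall k : nat, exists e', Inv U tau a0 L e' (p + k%:Z) (q + k%:Z).
Proof.
move=> h; elim=> [|k [e' IH]]; first by exists e; rewrite !addr0.
case: (pump1 IH) => e2 h2; exists e2.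
have ee1 : p + k.+1%:Z = p + k%:Z + 1 by lia.
have ee2 : q + k.+1%:Z = q + k%:Z + 1 by lia.
by rewrite ee1 ee2.
Qed.



Theorem mainTheorem7 :
  ~ exists (U : seq tile) (tau' : nat) (R : sys -> repfun) (S : sys -> finasm),
      computable R /\ computable S /\
      forall T : sys, valid_sys T -> directed T ->
        valid_sys (U, S T, tau') /\ simulates (U, S T, tau') T (R T).
Proof.
case=> U [tau' [R [S [_ [_ H]]]]].
pose n := (size U + 2)%N.
have [vS sim] := H (Tn n) (Tvalid n) (T_directed n).
move: vS sim; set r := R (Tn n); set sd := S (Tn n) => vS.
case=> hm [hvr [i1 [i2 [i3 [i4 [icl _]]]]]].
set m := r.1 in hm.
pose seed' := to_asm sd.
have gS : good U tau' seed' := seed_good vS.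
have prodS : forall a', producible (U, sd, tau') a' -> good U tau' a'.
  by move=> a' h; apply: (produces_good gS h).
have tilesU : forall a', producible (U, sd, tau') a' -> forall y t, a' y = Some t -> t \in U.
  by move=> a' h; have [[_ [_ ht]] _] := prodS a' h.
have bound : forall a', producible (U, sd, tau') a' -> forall x,
    in_dom (Rstar r a') x -> (0 <= x) && (x <= n%:Z).
  move=> a' h x hx; have [hQ _] := Q_prod (i1 a' h); exact: (proj1 (hQ x hx)).
have pseed : producible (U, sd, tau') seed' by apply: freach_produces; apply: freach_refl.
have hnb : block_over U (nseq m None).
  by apply/allP => o; rewrite mem_nseq => /andP[_ /eqP ->].
have F2 : Rfun r (nseq m None) = None.
  case e: (Rfun r (nseq m None)) => [t|] //; exfalso.
  have e2 : Rfun r (blk m seed' (n.+1%:Z)) = Rfun r (nseq m None).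
    apply: hvr => //.
    - exact: size_nseq.
    - exact: blk_size.
    - exact: blk_over (tilesU _ pseed).
    - by move=> i; rewrite nth_nseq; case: ifP.
    - by rewrite e.
  have := bound _ pseed (n.+1%:Z); rewrite /in_dom /Rstar -/m e2 e => /(_ isT); lia.
have F3 : forall a', producible (U, sd, tau') a' -> forall x,
    Rstar r a' x != None -> nonempty_blk m a' x.
  move=> a' h x hx; case hb: (nonempty_blk m a' x) => //.
  by move: hx; rewrite /Rstar -/m blk_empty ?hb // F2.
have Pp0 : producible (Tn n) (P 0).
  by rewrite /producible Tseed; apply: freach_produces; apply: freach_refl.
have [a0 [pa0 ea0]] := i2 _ Pp0.
have B : forall x, in_dom (Rstar r seed') x -> x = 0.
  move=> x hx.
  have hv : Rfun r (blk m a0 x) = Rfun r (blk m seed' x).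
    apply: hvr => //.
    - exact: blk_size.
    - exact: blk_size.
    - exact: blk_over (tilesU _ pseed).
    - exact: blk_over (tilesU _ pa0).
    - by apply: blk_le_mono => y hy; apply: (produces_mono pa0).
  have : P 0 x != None by rewrite -ea0 /Rstar -/m hv.
  rewrite /P; case: ifP => // h _; lia.
have C : in_dom (Rstar r seed') 0 := (Q_prod (i1 _ pseed)).2.
have D : nonempty_blk m seed' 0 := F3 _ pseed 0 C.
have hm0 : 0 < m%:Z by lia.
have hm0' : m%:Z != 0 by lia.
have E : forall y, seed' y != None -> y < 2 * m%:Z.
  move=> y hy; have hb := blk_ne_div hm hy.
  have hx1 : (y %/ m%:Z)%Z <= 1.
    case: (icl _ pseed) => [c1|c2].
    - by case: (c1 _ hb) => /B; lia.
    - by have := c2 _ _ hb D; lia.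
  have := divz_eq y m%:Z; have := ltz_pmod y hm0; nia.
have [b' [tb' eb']] := i4 _ (P_terminal n).
have pb' : producible (U, sd, tau') b' := tb'.1.
have gb' := prodS _ pb'.
have hRn : Rstar r b' n%:Z != None by rewrite eb' /P ifT //; lia.
have [i hi hbi] := blk_ne_inv (F3 _ pb' _ hRn).
pose L := sd.1.
have hL : seed' L != None.
  case: vS => _ [hne _].
  by rewrite /seed' to_asm_dom lexx subrr /= lt0n size_eq0.
have hL2 := E _ hL.
have hbL : b' L != None by rewrite (produces_mono pb' hL).
have hdom : forall y, L <= y -> y <= m%:Z * n%:Z + i%:Z -> b' y != None.
  move=> y h1 h2; have [[_ [hint _]] _] := gb'.
  exact: (hint L y _ h1 h2 hbL hbi).
pose Nn := (size U).+1.
pose sq := [seq odflt dtile (b' (2 * m%:Z + k%:Z)) | k <- iota 0 Nn].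
have hsub : {subset sq <= U}.
  move=> t /mapP [k]; rewrite mem_iota => hk ->.
  have : b' (2 * m%:Z + k%:Z) != None.
    apply: hdom; first lia.
    rewrite /Nn /n in hk *; nia.
  case e: (b' _) => [t'|] // _; exact: tilesU _ pb' _ _ e.
have hnu : ~~ uniq sq.
  apply/negP => hu; have := uniq_leq_size hu hsub; rewrite /sq size_map size_iota /Nn; by rewrite ltnn.
have [i0 [j0 [hij hj] enth]] := uniqPn dtile hnu.
move: hij hj enth; rewrite size_map size_iota => hij hj.
rewrite !(nth_map 0%N) ?size_iota //; last by lia.
rewrite !nth_iota //; last by lia.
rewrite !add0n => enth.
pose p := 2 * m%:Z + i0%:Z; pose q := 2 * m%:Z + j0%:Z.
have hqP : q <= m%:Z * n%:Z + i%:Z by rewrite /q /Nn /n in hj *; nia.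
have epq : b' p = b' q.
  have hp : b' p != None by apply: hdom; rewrite /p; lia.
  have hq : b' q != None by apply: hdom => //; rewrite /q; lia.
  move: hp hq enth; rewrite /p /q.
  by case: (b' _) => [x|] //; case: (b' _) => [y|] // _ _ /= ->.
have hwin : forall x, seed' x != None -> (L <= x) && (x <= q).
  move=> x hx; have := E _ hx; move: hx; rewrite /seed' to_asm_dom => /andP[h1 _] h2.
  rewrite /q; apply/andP; split => //; lia.
have fr0 := restrict_freach gS pb' hwin.
have I0 : Inv U tau' seed' L (restr L q b') p q.
  split.
    move=> x; rewrite /in_dom /restr; case: ifP => // /andP[h1 h2].
    by apply: hdom => //; lia.
  split; first by rewrite /p /q; lia.
  split; first by rewrite /p; lia.
  split; first by rewrite /restr !ifT //; rewrite /p /q; lia.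
  split.
    move=> x; rewrite /in_dom /restr; case: ifP => // w1 d1; case: ifP => // w2 d2.
    rewrite /cut_strength /restr w1 w2; exact: (gb'.2 x d1 d2).
  split=> //.
  by move=> x t; rewrite /restr; case: ifP => // _; apply: tilesU pb' x t.
have [e [hd [_ [_ [_ [_ [_ hfr]]]]]]] := pumpk I0 (m * n.+2)%N.
have pe : producible (U, sd, tau') e := freach_produces hfr.
have hy : e (m%:Z * n.+2%:Z + 0%:Z) != None.
  have h2 : 2 * m%:Z <= m%:Z * n.+2%:Z.
    clear -hm0; have : (2 <= n.+2)%N by []. nia.
  have h3 : 0 <= q by rewrite /q; lia.
  rewrite -/(in_dom e _) hd; apply/andP; split.
  - clear -h2 hL2; lia.
  - clear -h3; lia.
have nb := blk_ne hm hy.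
have hL' : e L != None by rewrite (produces_mono pe hL).
have nbL := blk_ne_div hm hL'.
case: (icl _ pe) => [c1|c2].
- case: (c1 _ nb) => h; have := bound _ pe _ h; clear; lia.
- have := c2 _ _ nb nbL => eq.
  have := divz_eq L m%:Z; have := modz_ge0 L hm0'; rewrite -eq.
  move: hL2 hm0; clear; nia.
Qed.
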